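(* Let $\eta$ satisfy (A1) and (A2). Then $\lambda_{crit}(\eta)\ge0$, and: if $\lambda<\lambda_{crit}(\eta)$ then $\Phi_k(\lambda)(i,j)<\infty$ for all $i,j\in[d]$ and $k\in\mathbb Z$, $\eta$-a.s.; if $\lambda>\lambda_{crit}(\eta)$ then $\Phi_k(\lambda)(i,j)=\infty$ for all $i,j\in[d]$ and $k\in\mathbb Z$, $\eta$-a.s.
   Context: Setting. Fix $d\ge1$, $[d]=\{1,\dots,d\}$. $\Sigma$ is the set of triples $(q,r,p)$ of nonnegative $d\times d$ matrices with $(q+r+p)\mathbf 1=\mathbf 1$; $\Omega=\Sigma^{\mathbb Z}$, $\omega_n=(q_n,r_n,p_n)$, shift $(\theta\omega)_k=\omega_{k+1}$. For $\omega\in\Omega$, $P^{(x,i)}_\omega$ is the law of the Markov chain $(X_n,Y_n)$ on $\mathbb Z\times[d]$ started at $(x,i)$ which from $(k,i)$ jumps to $(k-1,j)$, $(k,j)$, $(k+1,j)$ with probabilities $q_k(i,j)$, $r_k(i,j)$, $p_k(i,j)$; $E^{(x,i)}_\omega$ its expectation; $T_x=\inf\{n\ge0:X_n=x\}$. For $\kappa>0$, $\Sigma_\kappa$ is the set of $(q,r,p)\in\Sigma$ with $\sum_jq(i,j)\ge\kappa$, $\sum_jp(i,j)\ge\kappa$ for all $i$, and $((I-r)^{-1}q)(i,j)\ge\kappa$, $((I-r)^{-1}p)(i,j)\ge\kappa$ for all $i,j$; $\Omega_\kappa=\Sigma_\kappa^{\mathbb Z}$. (A1): $\eta$ is stationary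 and ergodic under $\theta$. (A2): $\eta(\Omega_\kappa)=1$ for some $\kappa>0$. $\Phi_k(\lambda)$ is the $d\times d$ matrix with $\Phi_k(\lambda)(i,j)=E^{(k,i)}_\omega[e^{\lambda T_{k+1}}\mathbf 1\{T_{k+1}<\infty,Y_{T_{k+1}}=j\}]\in[0,\infty]$, and $\lambda_{crit}(\eta)=\sup\{\lambda:\eta(\max_i\sum_j\Phi_0(\lambda)(i,j)<\infty)=1\}$. *)

(* Defs.v *)
From Stdlib Require Import Reals ZArith Arith.
Open Scope R_scope.

(* [d] is represented by the indices 0..d-1 (nat). *)

Fixpoint rsum (n : nat) (f : nat -> R) : R :=
  match n with
  | O => 0
  | S m => rsum m f + f m
  end.

Definition Mat := nat -> nat -> R.

Definition mmul (d : nat) (A B : Mat) : Mat :=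
  fun i j => rsum d (fun l => A i l * B l j).

Definition idm : Mat := fun i j => if Nat.eq_dec i j then 1 else 0.

Definition msub (A B : Mat) : Mat := fun i j => A i j - B i j.

Record Trip := mkTrip { tq : Mat; tr : Mat; tp : Mat }.

Definition inSigma (d : nat) (s : Trip) : Prop :=
  (forall i j, (i < d)%nat -> (j < d)%nat ->
     0 <= tq s i j /\ 0 <= tr s i j /\ 0 <= tp s i j) /\
  (forall i, (i < d)%nat -> rsum d (fun j => tq s i j + tr s i j + tp s i j) = 1).

Definition is_inverse (d : nat) (A N : Mat) : Prop :=
  forall i j, (i < d)%nat -> (j < d)%nat ->
    mmul d N A i j = idm i j /\ mmul d A N i j = idm i j.

Definition inSigmaK (d : nat) (kappa : R) (s : Trip) : Prop :=
  inSigma d s /\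
  (forall i, (i < d)%nat ->
     rsum d (fun j => tq s i j) >= kappa /\ rsum d (fun j => tp s i j) >= kappa) /\
  exists N, is_inverse d (msub idm (tr s)) N /\
    forall i j, (i < d)%nat -> (j < d)%nat ->
      mmul d N (tq s) i j >= kappa /\ mmul d N (tp s) i j >= kappa.

Definition Env := Z -> Trip.

Definition shift (w : Env) : Env := fun k => w (k + 1)%Z.

(* The product sigma-algebra on environments: generated by the coordinate
   maps omega |-> q_n(i,j), r_n(i,j), p_n(i,j). *)
Inductive measurable (d : nat) : (Env -> Prop) -> Prop :=
  | meas_gen : forall (c : Trip -> Mat) (n : Z) (i j : nat) (a : R),
      (c = tq \/ c = tr \/ c = tp) -> (i < d)%nat -> (j < d)%nat ->
      measurable d (fun w => c (w n) i j <= a)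
  | meas_full : measurable d (fun _ => True)
  | meas_compl : forall A, measurable d A -> measurable d (fun w => ~ A w)
  | meas_union : forall A : nat -> Env -> Prop,
      (forall n, measurable d (A n)) -> measurable d (fun w => exists n, A n w)
  | meas_ext : forall A B, measurable d A -> (forall w, A w <-> B w) ->
      measurable d B.

Record ProbMeasure (d : nat) := {
  mu :> (Env -> Prop) -> R;
  mu_nonneg : forall A, measurable d A -> 0 <= mu A;
  mu_full : mu (fun _ => True) = 1;
  mu_sigma_add : forall A : nat -> Env -> Prop,
      (forall n, measurable d (A n)) ->
      (forall n m w, n <> m -> A n w -> A m w -> False) ->
      infinite_sum (fun n => mu (A n)) (mu (fun w => exists n, A n w))
}.

Definition almost_surely (d : nat) (eta : ProbMeasure d) (P : Env -> Prop) : Prop :=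
  exists A, measurable d A /\ mu d eta A = 1 /\ forall w, A w -> P w.

Definition stationary (d : nat) (eta : ProbMeasure d) : Prop :=
  forall A, measurable d A -> mu d eta (fun w => A (shift w)) = mu d eta A.

Definition ergodic (d : nat) (eta : ProbMeasure d) : Prop :=
  forall A, measurable d A -> (forall w, A (shift w) <-> A w) ->
    mu d eta A = 0 \/ mu d eta A = 1.

(* hit d w t n x i j = P^{(x,i)}_w (T_t = n, Y_n = j), computed by the
   first-step decomposition of the Markov chain. *)
Fixpoint hit (d : nat) (w : Env) (t : Z) (n : nat) (x : Z) (i j : nat) : R :=
  match n with
  | O => if Z.eq_dec x t then (if Nat.eq_dec i j then 1 else 0) else 0
  | S m =>
      if Z.eq_dec x t then 0 else
      rsum d (fun l =>
          tq (w x) i l * hit d w t m (x - 1)%Z l j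
        + tr (w x) i l * hit d w t m x l j
        + tp (w x) i l * hit d w t m (x + 1)%Z l j)
  end.

(* partial sums (over T_{k+1} < N) of
   Phi_k(lambda)(i,j) = E^{(k,i)}_w [ e^{lambda T_{k+1}} 1{T_{k+1} < oo, Y_{T_{k+1}} = j} ] *)
Definition PhiN (d : nat) (w : Env) (lam : R) (k : Z) (i j : nat) (N : nat) : R :=
  rsum N (fun n => exp (lam * INR n) * hit d w (k + 1)%Z n k i j).

Definition bounded_seq (u : nat -> R) : Prop := exists M, forall N, u N <= M.

(* Phi_k(lambda)(i,j) < oo  (nonnegative series with bounded partial sums);
   its negation is Phi_k(lambda)(i,j) = oo. *)
Definition Phi_finite (d : nat) (w : Env) (lam : R) (k : Z) (i j : nat) : Prop :=
  bounded_seq (PhiN d w lam k i j).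

(* max_i sum_j Phi_0(lambda)(i,j) < oo *)
Definition maxrow_Phi0_finite (d : nat) (w : Env) (lam : R) : Prop :=
  forall i, (i < d)%nat -> bounded_seq (fun N => rsum d (fun j => PhiN d w lam 0%Z i j N)).

Inductive ER := Fin (r : R) | PInf | MInf.

Definition ER_le (a b : ER) : Prop :=
  match a, b with
  | MInf, _ => True
  | _, PInf => True
  | Fin x, Fin y => x <= y
  | _, _ => False
  end.

Definition ER_lt (a b : ER) : Prop := ER_le a b /\ a <> b.

Definition is_ER_sup (S : R -> Prop) (s : ER) : Prop :=
  (forall x, S x -> ER_le (Fin x) s) /\
  (forall u, (forall x, S x -> ER_le (Fin x) u) -> ER_le s u).

Definition is_lambda_crit (d : nat) (eta : ProbMeasure d) (s : ER) : Prop :=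
  is_ER_sup (fun lam => almost_surely d eta (fun w => maxrow_Phi0_finite d w lam)) s.

(* Main.v *)
Require Import Defs.
From Stdlib Require Import Reals ZArith Arith Lra Lia Classical FunctionalExtensionality PropExtensionality.
Open Scope R_scope.

Lemma rsum_ext n f g : (forall l, (l < n)%nat -> f l = g l) -> rsum n f = rsum n g.
Proof. induction n; simpl; intros H; auto. rewrite IHn by (intros; apply H; lia). rewrite H by lia; auto. Qed.

Lemma rsum_le n f g : (forall l, (l < n)%nat -> f l <= g l) -> rsum n f <= rsum n g.
Proof. induction n; simpl; intros H; [lra|]. assert (H1 := H n (Nat.lt_succ_diag_r n)).
 assert (rsum n f <= rsum n g) by (apply IHn; intros; apply H; lia). lra. Qed.

Lemma rsum_zero n : rsum n (fun _ => 0) = 0.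
Proof. induction n; simpl; auto. rewrite IHn; lra. Qed.

Lemma rsum_nonneg n f : (forall l, (l < n)%nat -> 0 <= f l) -> 0 <= rsum n f.
Proof. intros H. rewrite <- (rsum_zero n). apply rsum_le; auto. Qed.

Lemma rsum_plus n f g : rsum n (fun l => f l + g l) = rsum n f + rsum n g.
Proof. induction n; simpl; [lra|]. rewrite IHn; lra. Qed.

Lemma rsum_minus n f g : rsum n (fun l => f l - g l) = rsum n f - rsum n g.
Proof. induction n; simpl; [lra|]. rewrite IHn; lra. Qed.

Lemma rsum_scal_l n c f : c * rsum n f = rsum n (fun l => c * f l).
Proof. induction n; simpl; [lra|]. rewrite <- IHn; lra. Qed.

Lemma rsum_scal_r n c f : rsum n f * c = rsum n (fun l => f l * c).
Proof. induction n; simpl; [lra|]. rewrite <- IHn; lra. Qed.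

Lemma rsum_exch n m f : rsum n (fun a => rsum m (fun b => f a b)) = rsum m (fun b => rsum n (fun a => f a b)).
Proof. induction n; simpl. - rewrite rsum_zero; auto. - rewrite IHn. rewrite <- rsum_plus. auto. Qed.

Lemma rsum_term n f k : (forall l, (l < n)%nat -> 0 <= f l) -> (k < n)%nat -> f k <= rsum n f.
Proof. induction n; intros H Hk; [lia|]. simpl. destruct (Nat.eq_dec k n).
 - subst. assert (0 <= rsum n f) by (apply rsum_nonneg; intros; apply H; lia). lra.
 - assert (f k <= rsum n f) by (apply IHn; [intros; apply H; lia| lia]). assert (0 <= f n) by (apply H; lia). lra. Qed.

Lemma rsum_front n f : rsum (S n) f = f O + rsum n (fun a => f (S a)).
Proof. induction n; simpl in *; [lra|]. rewrite IHn. lra. Qed.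

Lemma rsum_add C N f : rsum (C + N) f = rsum C f + rsum N (fun a => f (C + a)%nat).
Proof. induction N; simpl. - rewrite Nat.add_0_r; lra. - rewrite Nat.add_succ_r. simpl. rewrite IHN; lra. Qed.

Lemma rsum_delta n i f : (i < n)%nat -> rsum n (fun l => (if Nat.eq_dec i l then 1 else 0) * f l) = f i.
Proof. induction n; intros Hi; [lia|]. simpl. destruct (Nat.eq_dec i n).
 - subst. rewrite (rsum_ext _ _ (fun _ => 0)). rewrite rsum_zero; lra.
   intros l Hl. destruct (Nat.eq_dec n l); [lia|lra].
 - rewrite IHn by lia. lra. Qed.

Lemma rsum_abs n f : Rabs (rsum n f) <= rsum n (fun l => Rabs (f l)).
Proof. induction n; simpl. - rewrite Rabs_R0; lra. - eapply Rle_trans; [apply Rabs_triang|]. lra. Qed.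

Lemma rsum_bounded_seq n (f : nat -> nat -> R) :
  (forall j, (j < n)%nat -> bounded_seq (f j)) -> bounded_seq (fun N => rsum n (fun j => f j N)).
Proof. induction n; intros H. - exists 0; intros; simpl; lra.
 - destruct IHn as [M1 HM1]; [intros; apply H; lia|]. destruct (H n) as [M2 HM2]; [lia|].
   exists (M1 + M2); intros N; simpl. specialize (HM1 N); specialize (HM2 N); lra. Qed.

Fixpoint mpow (d : nat) (r : Mat) (n : nat) : Mat :=
  match n with O => idm | S n => mmul d (mpow d r n) r end.

Lemma mmul_assoc d A B C i j : mmul d (mmul d A B) C i j = mmul d A (mmul d B C) i j.
Proof. unfold mmul.
 transitivity (rsum d (fun l => rsum d (fun m => A i m * B m l * C l j))).
 - apply rsum_ext; intros. rewrite rsum_scal_r; auto.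
 - rewrite rsum_exch. apply rsum_ext; intros. rewrite rsum_scal_l. apply rsum_ext; intros; ring. Qed.

Lemma mmul_idm_l d A i j : (i < d)%nat -> mmul d idm A i j = A i j.
Proof. intros. unfold mmul, idm. apply (rsum_delta d i (fun l => A l j)); auto. Qed.

Lemma mmul_ext_r d A B B' i j : (forall l, (l < d)%nat -> B l j = B' l j) -> mmul d A B i j = mmul d A B' i j.
Proof. intros H; unfold mmul; apply rsum_ext; intros; rewrite H; auto. Qed.

Lemma mmul_ext_l d A A' B i j : (forall l, (l < d)%nat -> A i l = A' i l) -> mmul d A B i j = mmul d A' B i j.
Proof. intros H; unfold mmul; apply rsum_ext; intros; rewrite H; auto. Qed.

Definition nonneg_env (d : nat) (w : Env) := forall x i j, (i < d)%nat -> (j < d)%nat ->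
  0 <= tq (w x) i j /\ 0 <= tr (w x) i j /\ 0 <= tp (w x) i j.

Definition good (d : nat) (kappa : R) (w : Env) := forall n, inSigmaK d kappa (w n).

Lemma good_nonneg d k w : good d k w -> nonneg_env d w.
Proof. intros H x i j Hi Hj. destruct (H x) as [[H1 _] _]. apply H1; auto. Qed.

Lemma idm_row d a : (a < d)%nat -> rsum d (fun b => idm a b) = 1.
Proof. intros. rewrite (rsum_ext _ _ (fun b => (if Nat.eq_dec a b then 1 else 0) * 1)).
 apply rsum_delta; auto. intros; unfold idm; ring. Qed.

Lemma mpow_prop d r : (forall a b, (a < d)%nat -> (b < d)%nat -> 0 <= r a b) ->
  (forall a, (a < d)%nat -> rsum d (fun b => r a b) <= 1) ->
  forall n a, (a < d)%nat -> (forall b, (b < d)%nat -> 0 <= mpow d r n a b) /\ rsum d (fun b => mpow d r n a b) <= 1.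
Proof. intros H0 H1. induction n; intros a Ha; simpl.
 - split. intros; unfold idm; destruct Nat.eq_dec; lra. rewrite idm_row by auto; lra.
 - destruct (IHn a Ha) as [P1 P2]. split.
   + intros b Hb. unfold mmul. apply rsum_nonneg; intros. apply Rmult_le_pos; auto.
   + unfold mmul. rewrite rsum_exch.
     apply Rle_trans with (rsum d (fun l => mpow d r n a l)); auto.
     apply rsum_le; intros l Hl. rewrite <- rsum_scal_l.
     specialize (H1 l Hl). specialize (P1 l Hl). change (rsum d (r l)) with (rsum d (fun b => r l b)). nra. Qed.

Lemma mpow_le1 d r n a b : (forall a b, (a < d)%nat -> (b < d)%nat -> 0 <= r a b) ->
  (forall a, (a < d)%nat -> rsum d (fun b => r a b) <= 1) -> (a < d)%nat -> (b < d)%nat ->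
  0 <= mpow d r n a b <= 1.
Proof. intros H0 H1 Ha Hb. destruct (mpow_prop d r H0 H1 n a Ha) as [P1 P2]. split; auto.
 eapply Rle_trans; [|apply P2]. apply (rsum_term d (fun b => mpow d r n a b)); auto. Qed.

Section Hit.
Variable d : nat.
Variable w : Env.
Hypothesis HNN : nonneg_env d w.

Lemma hit_nonneg t n : forall x i j, (i < d)%nat -> (j < d)%nat -> 0 <= hit d w t n x i j.
Proof. induction n; intros x i j Hi Hj; simpl.
 - destruct Z.eq_dec; [destruct Nat.eq_dec|]; lra.
 - destruct Z.eq_dec; [lra|]. apply rsum_nonneg; intros l Hl.
   destruct (HNN x i l Hi Hl) as [A [B C]].
   assert (0 <= hit d w t n (x-1) l j) by auto. assert (0 <= hit d w t n x l j) by auto.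
   assert (0 <= hit d w t n (x+1) l j) by auto. nra. Qed.

Lemma hit_S t n x i j : x <> t -> hit d w t (S n) x i j = rsum d (fun l =>
          tq (w x) i l * hit d w t n (x - 1)%Z l j
        + tr (w x) i l * hit d w t n x l j
        + tp (w x) i l * hit d w t n (x + 1)%Z l j).
Proof. intros H; simpl. destruct Z.eq_dec; congruence. Qed.

Lemma drop_r t c x m j : x <> t -> (m < d)%nat -> (j < d)%nat ->
  rsum d (fun l => tr (w x) m l * hit d w t c x l j) <= hit d w t (S c) x m j.
Proof. intros H Hm Hj. rewrite hit_S by auto. apply rsum_le; intros l Hl.
 destruct (HNN x m l Hm Hl) as [A [B C]].
 assert (0 <= hit d w t c (x-1) l j) by (apply hit_nonneg; auto).
 assert (0 <= hit d w t c (x+1) l j) by (apply hit_nonneg; auto). nra. Qed.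

Lemma drop_q t c x m j : x <> t -> (m < d)%nat -> (j < d)%nat ->
  rsum d (fun l => tq (w x) m l * hit d w t c (x-1)%Z l j) <= hit d w t (S c) x m j.
Proof. intros H Hm Hj. rewrite hit_S by auto. apply rsum_le; intros l Hl.
 destruct (HNN x m l Hm Hl) as [A [B C]].
 assert (0 <= hit d w t c x l j) by (apply hit_nonneg; auto).
 assert (0 <= hit d w t c (x+1) l j) by (apply hit_nonneg; auto). nra. Qed.

Lemma mpow_nonneg x n i b : (i < d)%nat -> (b < d)%nat -> 0 <= mpow d (tr (w x)) n i b.
Proof. revert b. induction n; intros b Hi Hb; simpl.
 - unfold idm; destruct Nat.eq_dec; lra.
 - unfold mmul. apply rsum_nonneg; intros l Hl. apply Rmult_le_pos. apply IHn; auto. apply (HNN x l b Hl Hb). Qed.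

Lemma stay t x j : x <> t -> (j < d)%nat -> forall n c i, (i < d)%nat ->
  rsum d (fun l => mpow d (tr (w x)) n i l * hit d w t c x l j) <= hit d w t (n + c) x i j.
Proof. intros Hx Hj. induction n; intros c i Hi.
 - simpl. unfold idm. rewrite rsum_delta by auto. lra.
 - replace (S n + c)%nat with (n + S c)%nat by lia.
   eapply Rle_trans; [|apply IHn; auto].
   apply Rle_trans with (rsum d (fun l => mpow d (tr (w x)) n i l * rsum d (fun m => tr (w x) l m * hit d w t c x m j))).
   + simpl. unfold mmul.
     transitivity (rsum d (fun m => rsum d (fun l => mpow d (tr (w x)) n i l * tr (w x) l m * hit d w t c x m j))).
     * right. apply rsum_ext; intros. rewrite rsum_scal_r; auto.
     * rewrite rsum_exch. right. apply rsum_ext; intros. rewrite rsum_scal_l. apply rsum_ext; intros; ring.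
   + apply rsum_le; intros l Hl. apply Rmult_le_compat_l. apply mpow_nonneg; auto.
     apply drop_r; auto. Qed.

Lemma left_exc t x j n b i : x <> t -> (j < d)%nat -> (i < d)%nat ->
  rsum d (fun m => mmul d (mpow d (tr (w x)) n) (tq (w x)) i m * hit d w t b (x-1)%Z m j) <= hit d w t (n + S b) x i j.
Proof. intros Hx Hj Hi. eapply Rle_trans; [|apply stay; auto].
 apply Rle_trans with (rsum d (fun l => mpow d (tr (w x)) n i l * rsum d (fun m => tq (w x) l m * hit d w t b (x-1)%Z m j))).
 + unfold mmul.
   transitivity (rsum d (fun m => rsum d (fun l => mpow d (tr (w x)) n i l * tq (w x) l m * hit d w t b (x-1)%Z m j))).
   * right. apply rsum_ext; intros. rewrite rsum_scal_r; auto.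
   * rewrite rsum_exch. right. apply rsum_ext; intros. rewrite rsum_scal_l. apply rsum_ext; intros; ring.
 + apply rsum_le; intros l Hl. apply Rmult_le_compat_l. apply mpow_nonneg; auto.
   apply drop_q; auto. Qed.

Lemma right_exc t x j n i : (x + 1)%Z = t -> (j < d)%nat -> (i < d)%nat ->
  mmul d (mpow d (tr (w x)) n) (tp (w x)) i j <= hit d w t (n + 1) x i j.
Proof. intros Hx Hj Hi. eapply Rle_trans; [|apply stay; auto; lia].
 unfold mmul. apply rsum_le; intros l Hl. apply Rmult_le_compat_l. apply mpow_nonneg; auto.
 rewrite hit_S by lia.
 apply Rle_trans with (tp (w x) l j * hit d w t 0 (x+1)%Z j j).
 { simpl. destruct Z.eq_dec; [|lia]. destruct Nat.eq_dec; [|lia]. lra. }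
 eapply Rle_trans.
 2:{ apply rsum_le with (f := fun m => tp (w x) l m * hit d w t 0 (x+1)%Z m j). intros m Hm.
     destruct (HNN x l m Hl Hm) as [A [B C]].
     assert (0 <= hit d w t 0 (x-1) m j) by (apply hit_nonneg; auto).
     assert (0 <= hit d w t 0 x m j) by (apply hit_nonneg; auto). nra. }
 apply (rsum_term d (fun m => tp (w x) l m * hit d w t 0 (x+1)%Z m j)); auto.
 intros m Hm. apply Rmult_le_pos. apply (HNN x l m Hl Hm). apply hit_nonneg; auto. Qed.

Lemma mix (a b c : nat -> R) (A B C : nat -> nat -> R) (H : nat -> R) :
  rsum d (fun m => rsum d (fun l => a l * A l m + b l * B l m + c l * C l m) * H m) =
  rsum d (fun l => a l * rsum d (fun m => A l m * H m) + b l * rsum d (fun m => B l m * H m) + c l * rsum d (fun m => C l m * H m)).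
Proof.
 transitivity (rsum d (fun m => rsum d (fun l => a l * A l m * H m + b l * B l m * H m + c l * C l m * H m))).
 - apply rsum_ext; intros. rewrite rsum_scal_r. apply rsum_ext; intros; ring.
 - rewrite rsum_exch. apply rsum_ext; intros.
   rewrite !rsum_scal_l, <- !rsum_plus. apply rsum_ext; intros; ring. Qed.

Lemma comp s t j : (s < t)%Z -> (j < d)%nat -> forall a b x i, (x <= s)%Z -> (i < d)%nat ->
  rsum d (fun l => hit d w s a x i l * hit d w t b s l j) <= hit d w t (a + b) x i j.
Proof. intros Hst Hj. induction a; intros b x i Hx Hi.
 - simpl. destruct (Z.eq_dec x s).
   + subst. rewrite rsum_delta by auto. lra.
   + rewrite (rsum_ext _ _ (fun _ => 0)). rewrite rsum_zero. apply hit_nonneg; auto.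
     intros; ring.
 - destruct (Z.eq_dec x s).
   + subst. rewrite (rsum_ext _ _ (fun _ => 0)). rewrite rsum_zero. apply hit_nonneg; auto.
     intros l Hl. simpl. destruct Z.eq_dec; [ring|congruence].
   + rewrite (rsum_ext _ _ (fun m => rsum d (fun l =>
          tq (w x) i l * hit d w s a (x - 1)%Z l m
        + tr (w x) i l * hit d w s a x l m
        + tp (w x) i l * hit d w s a (x + 1)%Z l m) * hit d w t b s m j)).
     2:{ intros; rewrite hit_S; auto. }
     rewrite mix. simpl (S a + b)%nat. rewrite hit_S by lia.
     apply rsum_le; intros l Hl. destruct (HNN x i l Hi Hl) as [A [B C]].
     assert (rsum d (fun m => hit d w s a (x-1) l m * hit d w t b s m j) <= hit d w t (a+b) (x-1) l j) by (apply IHa; auto; lia).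
     assert (rsum d (fun m => hit d w s a x l m * hit d w t b s m j) <= hit d w t (a+b) x l j) by (apply IHa; auto; lia).
     assert (rsum d (fun m => hit d w s a (x+1) l m * hit d w t b s m j) <= hit d w t (a+b) (x+1) l j) by (apply IHa; auto; lia).
     nra. Qed.

End Hit.

Lemma rsum_const n c : rsum n (fun _ => c) = INR n * c.
Proof. induction n; simpl; [lra|]. rewrite IHn. destruct n; simpl; lra. Qed.

Lemma nat_unbounded x : exists M : nat, x < INR M.
Proof. destruct (archimed x) as [H1 _]. destruct (Z_lt_le_dec (up x) 0).
 - exists O. simpl. assert (IZR (up x) < 0) by (apply IZR_lt in l; auto). lra.
 - exists (Z.to_nat (up x)). rewrite INR_IZR_INZ. rewrite Z2Nat.id by lia. auto. Qed.

Lemma tel d r u y : (forall a b, (a < d)%nat -> (b < d)%nat -> u a b = y a b + mmul d r u a b) ->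
  forall K a b, (a < d)%nat -> (b < d)%nat ->
  u a b = rsum K (fun n => mmul d (mpow d r n) y a b) + mmul d (mpow d r K) u a b.
Proof. intros H. induction K; intros a b Ha Hb.
 - simpl. rewrite mmul_idm_l by auto. lra.
 - rewrite IHK by auto. simpl rsum.
   rewrite (mmul_ext_r d _ _ (fun a' b' => y a' b' + mmul d r u a' b')) by (intros; apply H; auto).
   assert (E : mmul d (mpow d r K) (fun a' b' => y a' b' + mmul d r u a' b') a b = mmul d (mpow d r K) y a b + mmul d (mpow d r K) (mmul d r u) a b).
   { unfold mmul. rewrite <- rsum_plus. apply rsum_ext; intros; ring. }
   rewrite E. simpl mpow. rewrite mmul_assoc. lra. Qed.

Lemma inv_eq d r N y : is_inverse d (msub idm r) N -> forall a b, (a < d)%nat -> (b < d)%nat ->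
  mmul d N y a b = y a b + mmul d r (mmul d N y) a b.
Proof. intros Hinv a b Ha Hb.
 assert (E1 : mmul d (msub idm r) (mmul d N y) a b = y a b).
 { rewrite <- mmul_assoc. rewrite (mmul_ext_l d _ idm). apply mmul_idm_l; auto.
   intros l Hl. apply (Hinv a l Ha Hl). }
 assert (E2 : mmul d (msub idm r) (mmul d N y) a b = mmul d idm (mmul d N y) a b - mmul d r (mmul d N y) a b).
 { unfold mmul, msub. rewrite <- rsum_minus. apply rsum_ext; intros. ring. }
 rewrite mmul_idm_l in E2 by auto. lra. Qed.

Lemma krylov d kappa r N y i j : kappa > 0 -> is_inverse d (msub idm r) N ->
  (forall a b, (a < d)%nat -> (b < d)%nat -> 0 <= r a b) ->
  (forall a, (a < d)%nat -> rsum d (fun b => r a b) <= 1) ->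
  (forall a b, (a < d)%nat -> (b < d)%nat -> 0 <= y a b) ->
  (i < d)%nat -> (j < d)%nat -> mmul d N y i j >= kappa ->
  exists n, mmul d (mpow d r n) y i j > 0.
Proof. intros Hk Hinv Hr Hrow Hy Hi Hj Hu.
 apply NNPP; intros Hc.
 assert (Z0 : forall n, mmul d (mpow d r n) y i j = 0).
 { intros n. assert (~ mmul d (mpow d r n) y i j > 0) by (intro; apply Hc; eauto).
   assert (0 <= mmul d (mpow d r n) y i j). { unfold mmul. apply rsum_nonneg; intros l Hl.
     apply Rmult_le_pos; auto. apply mpow_le1; auto. } lra. }
 set (u := mmul d N y) in *.
 assert (T1 : forall K, mmul d (mpow d r K) u i j = u i j).
 { intros K. rewrite (tel d r u y (inv_eq d r N y Hinv) K i j Hi Hj).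
   rewrite (rsum_ext _ _ (fun _ => 0)) by (intros; apply Z0). rewrite rsum_zero. lra. }
 set (v := mmul d N u).
 set (B := Rabs (v i j) + rsum d (fun l => Rabs (v l j))).
 destruct (nat_unbounded (B / kappa)) as [M HM].
 assert (T2 := tel d r v u (inv_eq d r N u Hinv) M i j Hi Hj).
 rewrite (rsum_ext _ _ (fun _ => u i j)) in T2 by (intros; apply T1). rewrite rsum_const in T2.
 assert (Hb : Rabs (mmul d (mpow d r M) v i j) <= rsum d (fun l => Rabs (v l j))).
 { unfold mmul. eapply Rle_trans; [apply rsum_abs|]. apply rsum_le; intros l Hl.
   rewrite Rabs_mult. destruct (mpow_le1 d r M i l Hr Hrow Hi Hl).
   rewrite (Rabs_pos_eq (mpow d r M i l)) by auto.
   assert (0 <= Rabs (v l j)) by apply Rabs_pos. nra. }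
 assert (INR M * kappa <= INR M * u i j). { apply Rmult_le_compat_l. apply pos_INR. lra. }
 assert (INR M * u i j <= B). { unfold B. assert (H1 := Rle_abs (v i j)).
   assert (H2 := Rle_abs (- mmul d (mpow d r M) v i j)); rewrite Rabs_Ropp in H2. lra. }
 assert (B / kappa * kappa = B) by (field; lra).
 assert (B / kappa * kappa < INR M * kappa) by (apply Rmult_lt_compat_r; lra). lra. Qed.

Lemma sig_row d s a : inSigma d s -> (a < d)%nat -> rsum d (fun b => tr s a b) <= 1.
Proof. intros [H1 H2] Ha. rewrite <- (H2 a Ha). apply rsum_le; intros b Hb.
 destruct (H1 a b Ha Hb) as [A1 [A2 A3]]. lra. Qed.

Lemma pos_step d kappa s i l : kappa > 0 -> inSigmaK d kappa s -> (i < d)%nat -> (l < d)%nat ->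
  (exists n, mmul d (mpow d (tr s) n) (tq s) i l > 0) /\ (exists n, mmul d (mpow d (tr s) n) (tp s) i l > 0).
Proof. intros Hk [Hs [_ [N [Hinv HN]]]] Hi Hl. destruct (HN i l Hi Hl) as [N1 N2].
 assert (Hr : forall a b, (a < d)%nat -> (b < d)%nat -> 0 <= tr s a b) by (intros; apply Hs; auto).
 assert (Hrow := sig_row d s).
 split.
 - eapply krylov; eauto. intros; apply Hs; auto.
 - eapply krylov; eauto. intros; apply Hs; auto. Qed.

Lemma chain d kappa w lam k l m : kappa > 0 -> good d kappa w -> (l < d)%nat -> (m < d)%nat ->
  ~ Phi_finite d w lam k l m -> forall i j, (i < d)%nat -> (j < d)%nat -> ~ Phi_finite d w lam (k+1) i j.
Proof. intros Hk Hg Hl Hm Hnf i j Hi Hj [M HM]. apply Hnf.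
 assert (HN := good_nonneg d kappa w Hg).
 set (s := w (k+1)%Z).
 destruct (pos_step d kappa s i l Hk (Hg (k+1)%Z) Hi Hl) as [[n1 Hc1] _].
 destruct (pos_step d kappa s m j Hk (Hg (k+1)%Z) Hm Hj) as [_ [n2 Hc2]].
 set (c1 := mmul d (mpow d (tr s) n1) (tq s) i l) in *.
 set (c2 := mmul d (mpow d (tr s) n2) (tp s) m j) in *.
 set (C := (n1 + n2 + 2)%nat).
 set (t := (k + 1 + 1)%Z).
 assert (Key : forall a, c1 * c2 * hit d w (k+1) a k l m <= hit d w t (a + C) (k+1)%Z i j).
 { intros a.
   assert (R1 : c2 <= hit d w t (n2 + 1) (k+1)%Z m j) by (apply right_exc; auto; unfold t; ring).
   assert (Ha : 0 <= hit d w (k+1) a k l m) by (apply hit_nonneg; auto).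
   assert (R2 : hit d w (k+1) a k l m * hit d w t (n2 + 1) (k+1)%Z m j <= hit d w t (a + (n2+1)) k l j).
   { eapply Rle_trans; [|apply (comp d w HN (k+1)%Z t j); auto; unfold t; lia].
     apply (rsum_term d (fun m' => hit d w (k+1) a k l m' * hit d w t (n2+1) (k+1) m' j)); auto.
     intros; apply Rmult_le_pos; apply hit_nonneg; auto. }
   assert (R3 : c1 * hit d w t (a + (n2+1)) k l j <= hit d w t (n1 + S (a + (n2 + 1))) (k+1)%Z i j).
   { eapply Rle_trans; [|apply left_exc; auto; unfold t; lia].
     replace (k + 1 - 1)%Z with k by ring.
     apply (rsum_term d (fun m' => mmul d (mpow d (tr (w (k+1)%Z)) n1) (tq (w (k+1)%Z)) i m' * hit d w t (a + (n2+1)) k m' j)); auto.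
     intros m' Hm'. apply Rmult_le_pos. unfold mmul. apply rsum_nonneg; intros. apply Rmult_le_pos.
     apply mpow_nonneg; auto. apply HN; auto. apply hit_nonneg; auto. }
   replace (a + C)%nat with (n1 + S (a + (n2 + 1)))%nat by (unfold C; lia).
   assert (0 <= hit d w t (a + (n2+1)) k l j) by (apply hit_nonneg; auto).
   assert (c1 * (c2 * hit d w (k+1) a k l m) <= c1 * hit d w t (a + (n2+1)) k l j).
   { apply Rmult_le_compat_l. lra. nra. } nra. }
 set (K := exp (lam * INR C) * (c1 * c2)).
 assert (HK : K > 0) by (unfold K; apply Rmult_lt_0_compat; [apply exp_pos|nra]).
 exists (M / K). intros N.
 assert (K * PhiN d w lam k l m N <= PhiN d w lam (k+1) i j (C + N)).
 { unfold PhiN. rewrite rsum_add.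
   assert (0 <= rsum C (fun n => exp (lam * INR n) * hit d w (k + 1 + 1) n (k + 1) i j)).
   { apply rsum_nonneg; intros. apply Rmult_le_pos. left; apply exp_pos. apply hit_nonneg; auto. }
   assert (K * rsum N (fun n => exp (lam * INR n) * hit d w (k + 1) n k l m) <=
     rsum N (fun a => exp (lam * INR (C + a)) * hit d w (k + 1 + 1) (C + a) (k + 1) i j)).
   { rewrite rsum_scal_l. apply rsum_le; intros a Ha.
     rewrite plus_INR, Rmult_plus_distr_l, exp_plus. rewrite Nat.add_comm.
     specialize (Key a). fold t. unfold K.
     assert (0 < exp (lam * INR C)) by apply exp_pos. assert (0 < exp (lam * INR a)) by apply exp_pos.
     assert (exp (lam * INR C) * exp (lam * INR a) * (c1 * c2 * hit d w (k+1) a k l m) <= exp (lam * INR C) * exp (lam * INR a) * hit d w t (a + C) (k+1)%Z i j).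
     { apply Rmult_le_compat_l; [nra|auto]. } nra. }
   lra. }
 specialize (HM (C + N)%nat). apply Rmult_le_reg_l with K; auto.
 replace (K * (M / K)) with M by (field; lra). lra. Qed.

Lemma Zall_iff (P : Z -> Prop) : (forall k, P k) <-> (forall n : nat, P (Z.of_nat n) /\ P (- Z.of_nat n)%Z).
Proof. split; [intros H n; split; auto|]. intros H k. destruct (Z_le_gt_dec 0 k).
 - replace k with (Z.of_nat (Z.to_nat k)) by lia. apply H.
 - replace k with (- Z.of_nat (Z.to_nat (- k)))%Z by lia. apply H. Qed.

Section Meas.
Variable d : nat.
Variable eta : ProbMeasure d.
Notation M := (measurable d).
Notation m := (mu d eta).

Lemma m_ext A B : (forall w, A w <-> B w) -> m A = m B.
Proof. intros H. replace B with A; auto. apply functional_extensionality; intros w.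
 apply propositional_extensionality; auto. Qed.

Lemma M_False : M (fun _ => False).
Proof. eapply meas_ext. apply meas_compl, meas_full. intros w; tauto. Qed.

Lemma M_union2 A B : M A -> M B -> M (fun w => A w \/ B w).
Proof. intros HA HB. eapply meas_ext.
 apply (meas_union d (fun n => match n with O => A | _ => B end)). intros [|n]; auto.
 intros w; split. intros [[|n] H]; auto. intros [H|H]; [exists O|exists (S O)]; auto. Qed.

Lemma M_compl A : M A -> M (fun w => ~ A w).
Proof. apply meas_compl. Qed.

Lemma M_inter2 A B : M A -> M B -> M (fun w => A w /\ B w).
Proof. intros HA HB. apply (meas_ext d (fun w => ~ (~ A w \/ ~ B w))). apply M_compl, M_union2; apply M_compl; auto.
 intros w; split; [intros h; split; apply NNPP; tauto|tauto]. Qed.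

Lemma M_inter_nat (A : nat -> Env -> Prop) : (forall n, M (A n)) -> M (fun w => forall n, A n w).
Proof. intros H. eapply meas_ext. apply M_compl. apply meas_union. intros n; apply M_compl, H.
 intros w; split. intros H1 n. apply NNPP; intro; apply H1; eauto. intros H1 [n Hn]; auto. Qed.

Lemma M_inter_Z (A : Z -> Env -> Prop) : (forall k, M (A k)) -> M (fun w => forall k, A k w).
Proof. intros H. eapply meas_ext. apply M_inter_nat. intros n. apply M_inter2; apply H.
 intros w. symmetry. apply (Zall_iff (fun k => A k w)). Qed.

Lemma M_imp (P : Prop) A : M A -> M (fun w => P -> A w).
Proof. intros H. destruct (classic P).
 - eapply meas_ext; [apply H|]. intros; tauto.
 - eapply meas_ext; [apply meas_full|]. intros; tauto. Qed.

Lemma m_nonneg A : M A -> 0 <= m A.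
Proof. apply mu_nonneg. Qed.

Lemma m_False : m (fun _ => False) = 0.
Proof. assert (H := mu_sigma_add d eta (fun _ _ => False) (fun _ => M_False) (fun _ _ _ _ H _ => H)).
 cbv beta in H. rewrite (m_ext (fun w => exists n : nat, False) (fun _ => False)) in H by (intros; split; [intros [_ []]|tauto]).
 set (x := m (fun _ => False)) in *. assert (0 <= x) by (apply m_nonneg, M_False).
 destruct (Req_dec x 0); auto. exfalso.
 destruct (H x) as [N HN]; [lra|]. specialize (HN (S N) ltac:(lia)). rewrite sum_cte in HN.
 unfold Rdist in HN. rewrite S_INR in HN. rewrite S_INR in HN.
 assert (0 <= INR N) by apply pos_INR.
 rewrite Rabs_pos_eq in HN by nra. nra. Qed.

Lemma m_disj2 A B : M A -> M B -> (forall w, A w -> B w -> False) -> m (fun w => A w \/ B w) = m A + m B.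
Proof. intros HA HB Hd.
 set (Sq := fun n => match n with O => A | S O => B | _ => fun _ : Env => False end).
 assert (HS : forall n, M (Sq n)) by (intros [|[|n]]; simpl; auto; apply M_False).
 assert (Hdis : forall n k w, n <> k -> Sq n w -> Sq k w -> False).
 { intros [|[|n]] [|[|k]] w Hn H1 H2; simpl in *; try tauto; try lia; eauto. }
 assert (H := mu_sigma_add d eta Sq HS Hdis).
 rewrite (m_ext (fun w => exists n, Sq n w) (fun w => A w \/ B w)) in H.
 2:{ intros w; split. intros [[|[|n]] Hn]; simpl in *; tauto. intros [H1|H1]; [exists O|exists (1%nat)]; auto. }
 apply (uniqueness_sum _ _ _ H). intros eps Heps. exists 1%nat. intros n Hn.
 assert (E : forall k, sum_f_R0 (fun n => m (Sq n)) (S k) = m A + m B).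
 { induction k; simpl; auto. simpl in IHk. rewrite IHk. rewrite m_False. lra. }
 destruct n; [lia|]. rewrite E. unfold Rdist. replace (m A + m B - (m A + m B)) with 0 by ring.
 rewrite Rabs_R0; lra. Qed.

Lemma m_full : m (fun _ => True) = 1.
Proof. apply mu_full. Qed.

Lemma m_compl A : M A -> m (fun w => ~ A w) = 1 - m A.
Proof. intros HA. assert (H := m_disj2 A (fun w => ~ A w) HA (M_compl A HA) (fun w h1 h2 => h2 h1)).
 rewrite (m_ext _ (fun _ => True)) in H by (intros; split; [auto|intros _; apply classic]).
 rewrite m_full in H. lra. Qed.

Lemma m_le1 A : M A -> m A <= 1.
Proof. intros HA. assert (H := m_compl A HA). assert (0 <= m (fun w => ~ A w)) by (apply m_nonneg, M_compl, HA). lra. Qed.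

Lemma m_mono A B : M A -> M B -> (forall w, A w -> B w) -> m A <= m B.
Proof. intros HA HB Hs.
 assert (H := m_disj2 A (fun w => B w /\ ~ A w) HA (M_inter2 _ _ HB (M_compl _ HA)) (fun w h1 h2 => proj2 h2 h1)).
 rewrite (m_ext _ B) in H. assert (0 <= m (fun w => B w /\ ~ A w)) by (apply m_nonneg, M_inter2; auto; apply M_compl; auto). lra.
 intros w; split. intros [h|[h _]]; auto. intros h. destruct (classic (A w)); auto. Qed.

Lemma m_sub2 A B : M A -> M B -> m (fun w => A w \/ B w) <= m A + m B.
Proof. intros HA HB.
 assert (H := m_disj2 A (fun w => B w /\ ~ A w) HA (M_inter2 _ _ HB (M_compl _ HA)) (fun w h1 h2 => proj2 h2 h1)).
 rewrite (m_ext _ (fun w => A w \/ B w)) in H.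
 assert (m (fun w => B w /\ ~ A w) <= m B) by (apply m_mono; auto; [apply M_inter2; auto; apply M_compl; auto| tauto]). lra.
 intros w; split. intros [h|[h _]]; auto. intros [h|h]; auto. destruct (classic (A w)); auto. Qed.

Lemma m_null_union (A : nat -> Env -> Prop) : (forall n, M (A n)) -> (forall n, m (A n) = 0) ->
  m (fun w => exists n, A n w) = 0.
Proof. intros HM H0.
 set (D := fun n w => A n w /\ forall k, (k < n)%nat -> ~ A k w).
 assert (HD : forall n, M (D n)).
 { intros n. apply M_inter2; auto. apply M_inter_nat. intros k. apply M_imp. apply M_compl; auto. }
 assert (Hdis : forall n k w, n <> k -> D n w -> D k w -> False).
 { intros n k w Hnk [H1 H2] [H3 H4]. destruct (Nat.lt_gt_cases n k) as [[Hl|Hl] _]; auto.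
   apply (H4 n Hl H1). apply (H2 k Hl H3). }
 assert (H := mu_sigma_add d eta D HD Hdis).
 rewrite (m_ext (fun w => exists n, D n w) (fun w => exists n, A n w)) in H.
 - apply (uniqueness_sum _ _ _ H). intros eps Heps. exists O. intros n _.
   assert (E : forall k, sum_f_R0 (fun n => m (D n)) k = 0).
   { assert (Z : forall n', m (D n') = 0).
     { intros n'. assert (0 <= m (D n')) by (apply m_nonneg; auto).
       assert (m (D n') <= m (A n')) by (apply m_mono; auto; intros w [h _]; auto). rewrite H0 in *. lra. }
     induction k; simpl; rewrite Z; [lra|]. rewrite IHk; lra. }
   rewrite E. unfold Rdist. replace (0 - 0) with 0 by ring. rewrite Rabs_R0; lra.
 - intros w; split. intros [n [h _]]; eauto.
   intros [n Hn]. induction n as [n IH] using (well_founded_induction lt_wf).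
   destruct (classic (exists k, (k < n)%nat /\ A k w)) as [[k [Hk1 Hk2]]|Hno].
   + apply (IH k Hk1 Hk2).
   + exists n. split; auto. intros k Hk Ak. apply Hno; eauto. Qed.

Lemma m_one_inter_nat (A : nat -> Env -> Prop) : (forall n, M (A n)) -> (forall n, m (A n) = 1) ->
  m (fun w => forall n, A n w) = 1.
Proof. intros HM H1.
 assert (H := m_null_union (fun n w => ~ A n w) (fun n => M_compl _ (HM n))
    (fun n => ltac:(cbv beta; rewrite m_compl, H1 by auto; ring))).
 assert (HU : M (fun w => exists n, ~ A n w)) by (apply meas_union; intros; apply M_compl; auto).
 assert (H2 := m_compl _ HU). rewrite H in H2.
 rewrite (m_ext _ (fun w => forall n, A n w)) in H2. lra.
 intros w; split. intros h n. apply NNPP; intro; apply h; eauto. intros h [n hn]; auto. Qed.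

Lemma m_one_inter2 A B : M A -> M B -> m A = 1 -> m B = 1 -> m (fun w => A w /\ B w) = 1.
Proof. intros HA HB H1 H2.
 assert (H := m_one_inter_nat (fun n => match n with O => A | _ => B end)
   ltac:(intros [|n]; auto) ltac:(intros [|n]; auto)).
 rewrite <- H. apply m_ext. intros w; split. intros [h1 h2] [|n]; auto.
 intros h; split; [apply (h O)|apply (h 1%nat)]. Qed.

Lemma m_one_inter_Z (A : Z -> Env -> Prop) : (forall k, M (A k)) -> (forall k, m (A k) = 1) ->
  m (fun w => forall k, A k w) = 1.
Proof. intros HM H1.
 assert (H := m_one_inter_nat (fun n w => A (Z.of_nat n) w /\ A (- Z.of_nat n)%Z w)
   ltac:(intros n; apply M_inter2; auto) ltac:(intros n; apply m_one_inter2; auto)).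
 rewrite <- H. apply m_ext. intros w. apply (Zall_iff (fun k => A k w)). Qed.

Lemma m_inter_full X A : M X -> M A -> m A = 1 -> m (fun w => X w /\ A w) = m X.
Proof. intros HX HA H1.
 assert (H := m_disj2 (fun w => X w /\ A w) (fun w => X w /\ ~ A w) (M_inter2 _ _ HX HA)
   (M_inter2 _ _ HX (M_compl _ HA)) (fun w h1 h2 => proj2 h2 (proj2 h1))).
 rewrite (m_ext _ X) in H.
 assert (m (fun w => X w /\ ~ A w) <= m (fun w => ~ A w)) by (apply m_mono; [apply M_inter2|apply M_compl|]; auto; [apply M_compl; auto|tauto]).
 rewrite m_compl in * by auto. assert (0 <= m (fun w => X w /\ ~ A w)) by (apply m_nonneg, M_inter2; auto; apply M_compl; auto).
 lra. intros w; split. intros [[h _]|[h _]]; auto. intros h. destruct (classic (A w)); auto. Qed.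

End Meas.

Section MF.
Variable d : nat.
Notation M := (measurable d).

Definition mfun (f : Env -> R) := forall a, M (fun w => f w <= a).

Lemma mfun_ext f g : mfun f -> (forall w, f w = g w) -> mfun g.
Proof. intros H E a. apply (meas_ext d (fun w => f w <= a)). apply (H a). intros w; rewrite E; tauto. Qed.

Lemma inv_small e : e > 0 -> exists n : nat, / (INR n + 1) < e.
Proof. intros He. destruct (nat_unbounded (/ e)) as [n Hn]. exists n.
 assert (0 < / e) by (apply Rinv_0_lt_compat; lra).
 replace e with (/ / e) by (field; lra). apply Rinv_lt_contravar. nra. lra. Qed.

Lemma inv_pos n : 0 < / (INR n + 1).
Proof. apply Rinv_0_lt_compat. assert (0 <= INR n) by apply pos_INR. lra. Qed.

Lemma mfun_lt f a : mfun f -> M (fun w => f w < a).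
Proof. intros H. eapply meas_ext. apply (meas_union d (fun n w => f w <= a - / (INR n + 1))).
 intros n; apply H.
 intros w; split. intros [n Hn]. assert (H1 := inv_pos n). lra.
 intros Hl. destruct (inv_small (a - f w)) as [n Hn]; [lra|]. exists n. lra. Qed.

Lemma mfun_ge f a : mfun f -> M (fun w => f w >= a).
Proof. intros H. eapply meas_ext. apply M_compl, (mfun_lt f a H). intros w; split; intros; lra. Qed.

Lemma mfun_const c : mfun (fun _ => c).
Proof. intros a. destruct (Rle_dec c a).
 - eapply meas_ext; [apply meas_full|]. intros; tauto.
 - eapply meas_ext; [apply M_False|]. intros; tauto. Qed.

Definition qq (mm nn : nat) (s : bool) := (if s then INR nn else - INR nn) / (INR mm + 1).

Lemma dense x y : x < y -> exists mm nn s, x < qq mm nn s < y.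
Proof. intros Hxy. destruct (inv_small (y - x)) as [mm Hmm]; [lra|].
 set (D := INR mm + 1). assert (HD : 0 < D) by (unfold D; assert (H := pos_INR mm); lra).
 destruct (archimed (x * D)) as [A1 A2].
 set (z := up (x * D)) in *.
 assert (Hq : x < IZR z / D < y).
 { split. apply Rmult_lt_reg_r with D; auto. unfold Rdiv. rewrite Rmult_assoc, Rinv_l by lra. lra.
   assert (IZR z / D <= x + / D). { apply Rmult_le_reg_r with D; auto. unfold Rdiv.
     rewrite Rmult_assoc, Rinv_l by lra. rewrite Rmult_plus_distr_r, Rinv_l by lra. lra. }
   unfold D in *. lra. }
 destruct (Z_le_gt_dec 0 z).
 - exists mm, (Z.to_nat z), true. unfold qq. rewrite INR_IZR_INZ, Z2Nat.id by lia. auto.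
 - exists mm, (Z.to_nat (- z)), false. unfold qq. rewrite INR_IZR_INZ, Z2Nat.id by lia.
   rewrite opp_IZR, Ropp_involutive. auto. Qed.

Lemma mfun_plus f g : mfun f -> mfun g -> mfun (fun w => f w + g w).
Proof. intros Hf Hg.
 assert (Hlt : forall b, M (fun w => f w + g w < b)).
 { intros b. eapply meas_ext.
   apply (meas_union d (fun mm w => exists nn, exists s, f w < qq mm nn s /\ g w < b - qq mm nn s)).
   - intros mm. apply meas_union. intros nn. eapply meas_ext.
     apply (M_union2 d (fun w => f w < qq mm nn true /\ g w < b - qq mm nn true)
        (fun w => f w < qq mm nn false /\ g w < b - qq mm nn false)); apply M_inter2; apply mfun_lt; auto.
     intros w; split. intros [h|h]; eauto. intros [[|] h]; auto.
   - intros w; split. intros [mm [nn [s [h1 h2]]]]. lra.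
     intros h. destruct (dense (f w) (b - g w)) as [mm [nn [s Hs]]]; [lra|]. exists mm, nn, s. lra. }
 intros a. eapply meas_ext. apply (M_inter_nat d (fun n w => f w + g w < a + / (INR n + 1))).
 intros n; apply Hlt.
 intros w; split. intros h. apply Rnot_lt_le; intros hc. destruct (inv_small (f w + g w - a)) as [n Hn]; [lra|].
 specialize (h n). lra. intros h n. assert (H1 := inv_pos n). lra. Qed.

Lemma mfun_opp f : mfun f -> mfun (fun w => - f w).
Proof. intros H a. eapply meas_ext. apply (mfun_ge f (- a) H). intros w; split; intros; lra. Qed.

Lemma mfun_scal c f : mfun f -> mfun (fun w => c * f w).
Proof. intros H a. destruct (Rtotal_order c 0) as [Hc|[Hc|Hc]].
 - eapply meas_ext. apply (mfun_ge f (a / c) H). intros w. split; intros h.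
   + apply Rge_le in h. apply (Rmult_le_compat_neg_l c) in h; [|lra].
     replace (c * (a / c)) with a in h by (field; lra). lra.
   + apply Rle_ge. apply Rmult_le_reg_l with (- c); [lra|].
     replace (- c * (a / c)) with (- a) by (field; lra). lra.
 - subst. eapply meas_ext. apply (mfun_const 0 a). intros; split; intros; lra.
 - eapply meas_ext. apply (H (a / c)). intros w. split; intros h.
   + apply (Rmult_le_compat_l c) in h; [|lra]. replace (c * (a / c)) with a in h by (field; lra). lra.
   + apply Rmult_le_reg_l with c; [lra|]. replace (c * (a / c)) with a by (field; lra). auto. Qed.

Lemma mfun_sq f : mfun f -> mfun (fun w => f w * f w).
Proof. intros H a. destruct (Rlt_dec a 0).
 - eapply meas_ext; [apply M_False|]. intros w; split; [tauto|]. intros h. nra.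
 - eapply meas_ext. apply (M_inter2 d _ _ (H (sqrt a)) (mfun_ge f (- sqrt a) H)).
   assert (Hs := sqrt_sqrt a ltac:(lra)). assert (Hs0 := sqrt_pos a).
   intros w; split.
   + intros [h1 h2]. nra.
   + intros h. split; nra. Qed.

Lemma mfun_mult f g : mfun f -> mfun g -> mfun (fun w => f w * g w).
Proof. intros Hf Hg.
 assert (H1 : mfun (fun w => f w + g w)) by (apply mfun_plus; auto).
 assert (H2 : mfun (fun w => f w + - g w)) by (apply mfun_plus; auto; apply mfun_opp; auto).
 apply mfun_ext with (fun w => / 4 * ((f w + g w) * (f w + g w) + - ((f w + - g w) * (f w + - g w)))).
 apply mfun_scal, mfun_plus. apply mfun_sq; auto. apply mfun_opp, mfun_sq; auto.
 intros w; field. Qed.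

Lemma mfun_rsum n (f : nat -> Env -> R) : (forall l, (l < n)%nat -> mfun (f l)) -> mfun (fun w => rsum n (fun l => f l w)).
Proof. induction n; intros H; simpl. apply mfun_const. apply mfun_plus. apply IHn; intros; apply H; lia. apply H; lia. Qed.

Lemma mfun_hit t j : (j < d)%nat -> forall n x i, (i < d)%nat -> mfun (fun w => hit d w t n x i j).
Proof. intros Hj. induction n; intros x i Hi.
 - simpl. apply mfun_const.
 - destruct (Z.eq_dec x t).
   + apply mfun_ext with (fun _ => 0). apply mfun_const. intros w; simpl. destruct Z.eq_dec; congruence.
   + apply mfun_ext with (fun w => rsum d (fun l =>
          tq (w x) i l * hit d w t n (x - 1)%Z l j
        + tr (w x) i l * hit d w t n x l j
        + tp (w x) i l * hit d w t n (x + 1)%Z l j)).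
     2:{ intros w; simpl. destruct Z.eq_dec; congruence. }
     apply (mfun_rsum d (fun l w => tq (w x) i l * hit d w t n (x - 1)%Z l j
        + tr (w x) i l * hit d w t n x l j
        + tp (w x) i l * hit d w t n (x + 1)%Z l j)).
     intros l Hl. repeat apply mfun_plus; apply mfun_mult; auto.
     * intros a. apply (meas_gen d tq x i l a); auto.
     * intros a. apply (meas_gen d tr x i l a); auto.
     * intros a. apply (meas_gen d tp x i l a); auto. Qed.

Lemma mfun_PhiN lam k i j N : (i < d)%nat -> (j < d)%nat -> mfun (fun w => PhiN d w lam k i j N).
Proof. intros Hi Hj. unfold PhiN.
 apply (mfun_rsum N (fun n w => exp (lam * INR n) * hit d w (k + 1) n k i j)).
 intros; apply mfun_scal, mfun_hit; auto. Qed.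

Lemma bounded_nat u : bounded_seq u <-> exists Mn : nat, forall N, u N <= INR Mn.
Proof. split.
 - intros [Mr HM]. destruct (nat_unbounded Mr) as [Mn Hn]. exists Mn. intros N; specialize (HM N); lra.
 - intros [Mn HM]. exists (INR Mn); auto. Qed.

Lemma M_maxrow lam : M (fun w => maxrow_Phi0_finite d w lam).
Proof. apply (meas_ext d (fun w => forall i, (i < d)%nat -> exists Mn : nat, forall N, rsum d (fun j => PhiN d w lam 0 i j N) <= INR Mn)).
 - apply (M_inter_nat d (fun i w => (i < d)%nat -> exists Mn : nat, forall N, rsum d (fun j => PhiN d w lam 0 i j N) <= INR Mn)).
   intros i. destruct (lt_dec i d) as [Hi|Hi].
   + apply M_imp. apply meas_union; intros Mn. apply M_inter_nat; intros N.
     apply (mfun_rsum d (fun j w => PhiN d w lam 0 i j N)). intros; apply mfun_PhiN; auto.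
   + eapply meas_ext; [apply meas_full|]. intros w; split; auto. intros _ Hc; tauto.
 - intros w. unfold maxrow_Phi0_finite. split; intros h i Hi; apply bounded_nat; auto. Qed.
End MF.

Definition shiftn (k : Z) (w : Env) : Env := fun m => w (m + k)%Z.

Lemma M_shiftn d k A : measurable d A -> measurable d (fun w => A (shiftn k w)).
Proof. intros H. induction H.
 - apply (meas_ext d (fun w => c (w (n + k)%Z) i j <= a)). apply meas_gen; auto. intros; unfold shiftn; tauto.
 - apply meas_full.
 - apply meas_compl; auto.
 - apply (meas_union d (fun n w => A n (shiftn k w))); auto.
 - eapply meas_ext; [apply IHmeasurable|]. intros; apply H0. Qed.

Lemma hit_shift d w t n : forall s x i j, hit d w t n x i j = hit d (shiftn s w) (t - s) n (x - s) i j.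
Proof. induction n; intros s x i j; simpl.
 - destruct (Z.eq_dec x t); destruct (Z.eq_dec (x - s) (t - s)); auto; lia.
 - destruct (Z.eq_dec x t); destruct (Z.eq_dec (x - s) (t - s)); auto; try lia.
   apply rsum_ext; intros l Hl.
   rewrite (IHn s (x-1)%Z), (IHn s x), (IHn s (x+1)%Z).
   replace (x - 1 - s)%Z with (x - s - 1)%Z by ring. replace (x + 1 - s)%Z with (x - s + 1)%Z by ring.
   unfold shiftn. replace (x - s + s)%Z with x by ring. reflexivity. Qed.

Lemma PhiN_shift d w lam k i j N : PhiN d (shiftn k w) lam 0 i j N = PhiN d w lam k i j N.
Proof. unfold PhiN. apply rsum_ext; intros n Hn. rewrite (hit_shift d w (k+1) n k k).
 replace (k + 1 - k)%Z with (0 + 1)%Z by ring. replace (k - k)%Z with 0%Z by ring. auto. Qed.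

Lemma Phi_finite_shift d w lam k i j : Phi_finite d (shiftn k w) lam 0 i j <-> Phi_finite d w lam k i j.
Proof. unfold Phi_finite, bounded_seq. split; intros [Mb H]; exists Mb; intros N; specialize (H N);
 rewrite PhiN_shift in *; auto. Qed.

Lemma shiftn_shift k w : shiftn k (Defs.shift w) = shiftn (k + 1) w.
Proof. apply functional_extensionality; intros m. unfold shiftn, Defs.shift. f_equal. ring. Qed.

Lemma shiftn0 w : shiftn 0 w = w.
Proof. apply functional_extensionality; intros m. unfold shiftn. f_equal. ring. Qed.

Lemma good_shift d kappa k w : good d kappa w -> good d kappa (shiftn k w).
Proof. intros H n. apply H. Qed.

Lemma good_unshift d kappa k w : good d kappa (shiftn k w) -> good d kappa w.
Proof. intros H n. specialize (H (n - k)%Z). unfold shiftn in H. replace (n - k + k)%Z with n in H by ring. auto. Qed.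

Section Stat.
Variable d : nat.
Variable eta : ProbMeasure d.
Hypothesis Hst : stationary d eta.

Lemma m_shiftn_pos n : forall A, measurable d A -> mu d eta (fun w => A (shiftn (Z.of_nat n) w)) = mu d eta A.
Proof. induction n; intros A HA.
 - apply m_ext. intros w; simpl. rewrite shiftn0; tauto.
 - rewrite (m_ext d eta _ (fun w => (fun w' => A (Defs.shift w')) (shiftn (Z.of_nat n) w))).
   + rewrite (IHn (fun w' => A (Defs.shift w'))). apply Hst; auto. apply (M_shiftn d 1 A HA).
   + intros w. cbv beta. replace (Defs.shift (shiftn (Z.of_nat n) w)) with (shiftn (Z.of_nat (S n)) w). tauto.
     apply functional_extensionality; intros m. unfold shiftn, Defs.shift. f_equal. lia. Qed.

Lemma m_shiftn_neg n : forall A, measurable d A -> mu d eta (fun w => A (shiftn (- Z.of_nat n) w)) = mu d eta A.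
Proof. induction n; intros A HA.
 - apply m_ext. intros w; simpl. rewrite shiftn0; tauto.
 - rewrite <- (Hst (fun w => A (shiftn (- Z.of_nat (S n)) w))) by (apply M_shiftn; auto).
   rewrite <- (IHn A HA). apply m_ext. intros w. rewrite shiftn_shift.
   replace (- Z.of_nat (S n) + 1)%Z with (- Z.of_nat n)%Z by lia. tauto. Qed.

Lemma m_shiftn k A : measurable d A -> mu d eta (fun w => A (shiftn k w)) = mu d eta A.
Proof. intros HA. destruct (Z_le_gt_dec 0 k).
 - replace k with (Z.of_nat (Z.to_nat k)) by lia. apply m_shiftn_pos; auto.
 - replace k with (- Z.of_nat (Z.to_nat (- k)))%Z by lia. apply m_shiftn_neg; auto. Qed.
End Stat.

Lemma PhiN_nonneg d kappa w lam k i j N : good d kappa w -> (i < d)%nat -> (j < d)%nat -> 0 <= PhiN d w lam k i j N.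
Proof. intros Hg Hi Hj. unfold PhiN. apply rsum_nonneg; intros. apply Rmult_le_pos. left; apply exp_pos.
 apply hit_nonneg; auto. eapply good_nonneg; eauto. Qed.

Lemma row_to_entry d kappa w lam : good d kappa w -> maxrow_Phi0_finite d w lam ->
  forall i j, (i < d)%nat -> (j < d)%nat -> Phi_finite d w lam 0 i j.
Proof. intros Hg H i j Hi Hj. destruct (H i Hi) as [Mb HM]. exists Mb. intros N. eapply Rle_trans; [|apply (HM N)].
 apply (rsum_term d (fun j => PhiN d w lam 0 i j N)); auto. intros; eapply PhiN_nonneg; eauto. Qed.

Lemma entry_to_row d w lam : (forall i j, (i < d)%nat -> (j < d)%nat -> Phi_finite d w lam 0 i j) ->
  maxrow_Phi0_finite d w lam.
Proof. intros H i Hi. apply (rsum_bounded_seq d (fun j N => PhiN d w lam 0 i j N)). intros; apply H; auto. Qed.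

Lemma Phi_mono d kappa w lam lam' k i j : good d kappa w -> lam <= lam' -> (i < d)%nat -> (j < d)%nat ->
  Phi_finite d w lam' k i j -> Phi_finite d w lam k i j.
Proof. intros Hg Hl Hi Hj [Mb HM]. exists Mb. intros N. eapply Rle_trans; [|apply (HM N)].
 unfold PhiN. apply rsum_le; intros n Hn. apply Rmult_le_compat_r. apply hit_nonneg; auto. eapply good_nonneg; eauto.
 assert (lam * INR n <= lam' * INR n) by (apply Rmult_le_compat_r; auto; apply pos_INR).
 destruct (Req_dec (lam * INR n) (lam' * INR n)) as [E|E]. rewrite E; lra. left; apply exp_increasing; lra. Qed.

Lemma sum_hit_le1 d w : nonneg_env d w -> (forall x i, (i < d)%nat -> rsum d (fun l => tq (w x) i l + tr (w x) i l + tp (w x) i l) = 1) ->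
  forall N t x i, (i < d)%nat -> rsum N (fun n => rsum d (fun j => hit d w t n x i j)) <= 1.
Proof. intros HN Hrow. induction N; intros t x i Hi; [simpl; lra|].
 rewrite rsum_front. destruct (Z.eq_dec x t).
 - assert (E0 : rsum d (fun j => hit d w t 0 x i j) = 1).
   { simpl. destruct Z.eq_dec; [|congruence]. apply (idm_row d i Hi). }
   assert (E1 : rsum N (fun a => rsum d (fun j => hit d w t (S a) x i j)) = 0).
   { rewrite (rsum_ext _ _ (fun _ => 0)). apply rsum_zero. intros a _.
     rewrite (rsum_ext _ _ (fun _ => 0)). apply rsum_zero. intros; simpl. destruct Z.eq_dec; congruence. }
   rewrite E0, E1; lra.
 - assert (E0 : rsum d (fun j => hit d w t 0 x i j) = 0).
   { rewrite (rsum_ext _ _ (fun _ => 0)). apply rsum_zero. intros; simpl. destruct Z.eq_dec; congruence. }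
   rewrite E0, Rplus_0_l.
   set (G := fun y l => rsum N (fun n => rsum d (fun j => hit d w t n y l j))).
   assert (E1 : rsum N (fun a => rsum d (fun j => hit d w t (S a) x i j)) =
     rsum d (fun l => tq (w x) i l * G (x-1)%Z l + tr (w x) i l * G x l + tp (w x) i l * G (x+1)%Z l)).
   { unfold G.
     transitivity (rsum N (fun a => rsum d (fun l => rsum d (fun j => tq (w x) i l * hit d w t a (x-1)%Z l j + tr (w x) i l * hit d w t a x l j + tp (w x) i l * hit d w t a (x+1)%Z l j)))).
     - apply rsum_ext; intros a _. rewrite rsum_exch. apply rsum_ext; intros j Hj.
       rewrite hit_S by auto. auto.
     - rewrite rsum_exch. apply rsum_ext; intros l Hl. rewrite !rsum_scal_l. rewrite <- !rsum_plus.
       apply rsum_ext; intros a _. rewrite !rsum_scal_l. rewrite <- !rsum_plus. apply rsum_ext; intros; ring. }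
   rewrite E1. rewrite <- (Hrow x i Hi). apply rsum_le; intros l Hl.
   destruct (HN x i l Hi Hl) as [A1 [A2 A3]].
   assert (G (x-1)%Z l <= 1) by (apply IHN; auto). assert (G x l <= 1) by (apply IHN; auto).
   assert (G (x+1)%Z l <= 1) by (apply IHN; auto). nra. Qed.

Lemma Zall_succ (P : Z -> Prop) : (forall k, P (k + 1)%Z) <-> (forall k, P k).
Proof. split; intros H k; auto. replace k with (k - 1 + 1)%Z by ring. apply H. Qed.

Lemma ER_antisym (x : R) (lc : ER) : ER_le (Fin x) lc -> ER_le lc (Fin x) -> lc = Fin x.
Proof. destruct lc; simpl; intros; try tauto. f_equal; lra. Qed.

Theorem mainTheorem5 (d : nat) (Hd : (1 <= d)%nat) (eta : ProbMeasure d)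
  (A1 : stationary d eta /\ ergodic d eta)
  (A2 : exists kappa, kappa > 0 /\
          almost_surely d eta (fun w => forall n : Z, inSigmaK d kappa (w n)))
  (lc : ER) (Hlc : is_lambda_crit d eta lc) :
  ER_le (Fin 0) lc /\
  (forall lam : R, ER_lt (Fin lam) lc ->
     almost_surely d eta (fun w => forall (k : Z) (i j : nat),
        (i < d)%nat -> (j < d)%nat -> Phi_finite d w lam k i j)) /\
  (forall lam : R, ER_lt lc (Fin lam) ->
     almost_surely d eta (fun w => forall (k : Z) (i j : nat),
        (i < d)%nat -> (j < d)%nat -> ~ Phi_finite d w lam k i j)).
Proof.
 destruct A1 as [Hst Herg]. destruct A2 as [kappa [Hk [Ag [HMg [Hmg HAg]]]]].
 destruct Hlc as [Hub Hleast].
 set (At := fun w => forall k : Z, Ag (shiftn k w)).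
 assert (HMt : measurable d At) by (apply M_inter_Z; intros; apply M_shiftn; auto).
 assert (Hmt : mu d eta At = 1) by (apply m_one_inter_Z; intros; [apply M_shiftn; auto| rewrite m_shiftn; auto]).
 assert (Hgt : forall w, At w -> forall k, good d kappa (shiftn k w)) by (intros w H k n; apply (HAg _ (H k))).
 assert (Hgt0 : forall w, At w -> good d kappa w) by (intros w H; apply (good_unshift d kappa 0), Hgt; auto).
 split; [|split].
 -
   apply Hub. exists Ag. split; [auto|split; auto]. intros w Hw i Hi.
   exists 1. intros N.
   assert (Hg : good d kappa w) by (intros n; apply (HAg _ Hw)).
   rewrite (rsum_ext _ _ (fun j => rsum N (fun n => hit d w (0+1) n 0 i j))).
   2:{ intros j Hj. unfold PhiN. apply rsum_ext; intros. rewrite Rmult_0_l, exp_0; ring. }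
   rewrite rsum_exch. apply sum_hit_le1; auto. eapply good_nonneg; eauto.
   intros x i0 Hi0. destruct (Hg x) as [[_ H2] _]. apply H2; auto.
 -
   intros lam [Hle Hne].
   assert (Hex : exists lam', almost_surely d eta (fun w => maxrow_Phi0_finite d w lam') /\ lam < lam').
   { apply NNPP; intros Hc. apply Hne. symmetry. apply ER_antisym; auto. apply Hleast.
     intros x Hx. simpl. apply Rnot_lt_le. intros Hlt. apply Hc; eauto. }
   destruct Hex as [lam' [[A' [HMA' [HmA' HA']]] Hlt]].
   exists (fun w => At w /\ forall k, A' (shiftn k w)). split; [|split].
   + apply M_inter2; auto. apply M_inter_Z; intros; apply M_shiftn; auto.
   + apply m_one_inter2; auto. apply M_inter_Z; intros; apply M_shiftn; auto.
     apply m_one_inter_Z; intros; [apply M_shiftn; auto| rewrite m_shiftn; auto].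
   + intros w [Hw1 Hw2] k i j Hi Hj. apply Phi_finite_shift.
     apply (Phi_mono d kappa (shiftn k w) lam lam'); auto. lra.
     apply (row_to_entry d kappa); auto.
 -
   intros lam [Hle Hne].
   set (E := fun w => maxrow_Phi0_finite d w lam).
   assert (HME : measurable d E) by apply M_maxrow.
   assert (HnotS : ~ almost_surely d eta E).
   { intros Has. apply Hne. apply ER_antisym; auto. }
   assert (HmE : mu d eta E < 1).
   { destruct (Rlt_dec (mu d eta E) 1); auto. exfalso. apply HnotS. exists E. split; auto. split; auto.
     assert (mu d eta E <= 1) by (apply m_le1; auto). lra. }
   set (alpha := mu d eta (fun w => ~ E w)).
   assert (Ha : alpha > 0) by (unfold alpha; rewrite m_compl by auto; lra).
   assert (chainE' : forall w k, At w -> ~ E (shiftn k w) -> forall i j, (i < d)%nat -> (j < d)%nat -> ~ Phi_finite d w lam (k+1) i j).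
   { intros w k Hw HnE.
     assert (Hex : exists l m, (l < d)%nat /\ (m < d)%nat /\ ~ Phi_finite d (shiftn k w) lam 0 l m).
     { apply NNPP; intros Hc. apply HnE. apply entry_to_row. intros l m Hl Hm. apply NNPP; intros Hc2. apply Hc; eauto 6. }
     destruct Hex as [l [m [Hl [Hm Hnf]]]]. rewrite Phi_finite_shift in Hnf.
     apply (chain d kappa w lam k l m); auto. }
   assert (chainE : forall w k, At w -> ~ E (shiftn k w) -> ~ E (shiftn (k+1) w)).
   { intros w k Hw HnE HE. apply (chainE' w k Hw HnE 0 0)%nat; try lia.
     apply Phi_finite_shift. apply (row_to_entry d kappa); auto; lia. }
   set (Zs := fun (n : nat) w => ~ E (shiftn (- Z.of_nat n) w) /\ At w).
   assert (HMZ : forall n, measurable d (Zs n)) by (intros; apply M_inter2; auto; apply M_compl, M_shiftn; auto).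
   assert (HmZ : forall n, mu d eta (Zs n) = alpha).
   { intros n. unfold Zs. rewrite m_inter_full; auto. apply (m_shiftn d eta Hst _ (fun w => ~ E w)). apply M_compl; auto.
     apply M_compl, M_shiftn; auto. }
   assert (Hsub : forall n w, Zs (S n) w -> Zs n w).
   { intros n w [H1 H2]. split; auto. replace (- Z.of_nat n)%Z with (- Z.of_nat (S n) + 1)%Z by lia. apply chainE; auto. }
   set (Ds := fun n w => Zs n w /\ ~ Zs (S n) w).
   assert (HMD : forall n, measurable d (Ds n)) by (intros; apply M_inter2; auto; apply M_compl; auto).
   assert (HmD : forall n, mu d eta (Ds n) = 0).
   { intros n. assert (H := m_disj2 d eta (Zs (S n)) (Ds n) (HMZ _) (HMD n) (fun w h1 h2 => proj2 h2 h1)).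
     rewrite (m_ext d eta _ (Zs n)) in H. rewrite !HmZ in H. lra.
     intros w; split. intros [h|[h _]]; auto. intros h. destruct (classic (Zs (S n) w)); [left|right]; auto. split; auto. }
   set (Cs := fun w => At w /\ forall k, ~ E (shiftn k w)).
   assert (HMC : measurable d Cs) by (apply M_inter2; auto; apply M_inter_Z; intros; apply M_compl, M_shiftn; auto).
   assert (HinvC : forall w, Cs (Defs.shift w) <-> Cs w).
   { intros w. unfold Cs, At. setoid_rewrite shiftn_shift.
     rewrite (Zall_succ (fun k => Ag (shiftn k w))). rewrite (Zall_succ (fun k => ~ E (shiftn k w))). tauto. }
   assert (Hcov : forall w, Zs 0%nat w -> Cs w \/ exists n, Ds n w).
   { intros w H0. destruct (classic (forall n, Zs n w)) as [Hall|Hn].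
     - left. split. apply (proj2 H0). intros k. destruct (Z_le_gt_dec k 0).
       + replace k with (- Z.of_nat (Z.to_nat (- k)))%Z by lia. apply (Hall _).
       + assert (Hpos : forall n : nat, ~ E (shiftn (Z.of_nat n) w)).
         { induction n. apply (proj1 H0). replace (Z.of_nat (S n)) with (Z.of_nat n + 1)%Z by lia. apply chainE; auto. apply (proj2 H0). }
         replace k with (Z.of_nat (Z.to_nat k)) by lia. apply Hpos.
     - right. apply not_all_ex_not in Hn. destruct Hn as [N HN].
       induction N. contradiction. destruct (classic (Zs N w)). exists N; split; auto. apply IHN; auto. }
   assert (HmC : mu d eta Cs > 0).
   { assert (HU : measurable d (fun w => exists n, Ds n w)) by (apply meas_union; auto).
     assert (H1 := m_null_union d eta Ds HMD HmD).
     assert (H2 := m_sub2 d eta Cs (fun w => exists n, Ds n w) HMC HU).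
     assert (H3 : mu d eta (Zs 0%nat) <= mu d eta (fun w => Cs w \/ exists n, Ds n w)) by (apply m_mono; auto; apply M_union2; auto).
     rewrite HmZ in H3. lra. }
   assert (HmC1 : mu d eta Cs = 1) by (destruct (Herg Cs HMC HinvC); auto; lra).
   exists Cs. split; auto. split; auto. intros w [Hw1 Hw2] k i j Hi Hj.
   replace k with ((k - 1) + 1)%Z by ring. apply chainE'; auto.
Qed.
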